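(* The tensor product of effect algebras, $\otimes\colon\mathbf{EA}\times\mathbf{EA}\to\mathbf{EA}$, is a left Kan extension of the functor $E\circ *\colon\mathbf{FinBool}\times\mathbf{FinBool}\to\mathbf{EA}$ along $E\times E\colon\mathbf{FinBool}\times\mathbf{FinBool}\to\mathbf{EA}\times\mathbf{EA}$. That is, $$\otimes\cong\mathrm{Lan}_{E\times E}(E\circ * ).$$
   Context: Effect algebras are partial algebras $(A;+,0,1)$ satisfying the Foulis–Bennett axioms; one-element effect algebras are allowed. Morphisms preserve $1$ and defined sums; $\mathbf{EA}$ is the category. Boolean algebras are effect algebras via: $x+y$ is defined iff $x\wedge y=0$, and then $x+y=x\vee y$. For $[n]=\{1,\dots,n\}$, $\mathbf{FinBool}$ is the full subcategory of Boolean algebras on the objects $2^{[n]}$, $n\in\mathbb N$. $E\colon\mathbf{FinBool}\to\mathbf{EA}$ is the fully faithful inclusion, and $*\colon\mathbf{FinBool}\times\mathbf{FinBool}\to\mathbf{FinBool}$ is the coproduct (free product) of finite Boolean algebras. A bimorphism from $A,B$ to $C$ is a map $h\colon A\times B\to C$ with $h(1,1)=1$ that is additive (preserving orthogonality and sums) in each argument separately. The tensor product $A\otimes B$ is the universal (initial) bimorphism out of $A\times B$. It is functorial in $(A,B)$ via the universal property. *)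

(* Defs.v *)
From HB Require Import structures.
From mathcomp Require Import all_boot.
Set Implicit Arguments. Unset Strict Implicit. Unset Printing Implicit Defensive.

(** * Effect algebras (Foulis--Bennett).  The partial sum is [ea_sum : A -> A -> option A];
    [a + b] is defined iff [ea_sum a b = Some _]. One-element effect algebras are allowed. *)
Record EffAlg := {
  ea_car :> Type;
  ea_sum : ea_car -> ea_car -> option ea_car;
  ea_zero : ea_car;
  ea_one : ea_car;
  ea_comm : forall a b, ea_sum a b = ea_sum b a;
  ea_assoc : forall a b c bc, ea_sum b c = Some bc -> ea_sum a bc <> None ->
     exists ab, ea_sum a b = Some ab /\ ea_sum ab c = ea_sum a bc;
  ea_orthosupp : forall a, exists! a', ea_sum a a' = Some ea_one;
  ea_zero_one : forall a, ea_sum a ea_one <> None -> a = ea_zero }.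
Arguments ea_sum : clear implicits.
Arguments ea_zero : clear implicits.
Arguments ea_one : clear implicits.

Record EAHom (A B : EffAlg) := {
  eh :> A -> B;
  eh_one : eh (ea_one A) = ea_one B;
  eh_sum : forall a b c, ea_sum A a b = Some c -> ea_sum B (eh a) (eh b) = Some (eh c) }.

Lemma eh_id_one (A : EffAlg) : (fun x : A => x) (ea_one A) = ea_one A.
Proof. by []. Qed.
Lemma eh_id_sum (A : EffAlg) a b c : ea_sum A a b = Some c ->
  ea_sum A ((fun x : A => x) a) ((fun x : A => x) b) = Some ((fun x : A => x) c).
Proof. by []. Qed.
Definition EAid (A : EffAlg) : EAHom A A := Build_EAHom (@eh_id_one A) (@eh_id_sum A).

Section EAComp.
Variables (A B C : EffAlg) (g : EAHom B C) (f : EAHom A B).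
Lemma eh_comp_one : (fun x => g (f x)) (ea_one A) = ea_one C.
Proof. by rewrite /= !eh_one. Qed.
Lemma eh_comp_sum a b c : ea_sum A a b = Some c ->
  ea_sum C ((fun x => g (f x)) a) ((fun x => g (f x)) b) = Some ((fun x => g (f x)) c).
Proof. by move=> H; apply: eh_sum; apply: eh_sum. Qed.
Definition EAcomp : EAHom A C := Build_EAHom eh_comp_one eh_comp_sum.
End EAComp.

Record EABimor (A B C : EffAlg) := {
  bim :> A -> B -> C;
  bim_one : bim (ea_one A) (ea_one B) = ea_one C;
  bim_l : forall b a a' c, ea_sum A a a' = Some c ->
            ea_sum C (bim a b) (bim a' b) = Some (bim c b);
  bim_r : forall a b b' c, ea_sum B b b' = Some c ->
            ea_sum C (bim a b) (bim a b') = Some (bim a c) }.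

Section BimComp.
Variables (A B A' B' C : EffAlg) (h : EABimor A' B' C) (f : EAHom A A') (g : EAHom B B').
Lemma bimc_one : (fun a b => h (f a) (g b)) (ea_one A) (ea_one B) = ea_one C.
Proof. by rewrite /= !eh_one bim_one. Qed.
Lemma bimc_l b a a' c : ea_sum A a a' = Some c ->
  ea_sum C ((fun a b => h (f a) (g b)) a b) ((fun a b => h (f a) (g b)) a' b)
    = Some ((fun a b => h (f a) (g b)) c b).
Proof. by move=> H; apply: bim_l; apply: eh_sum. Qed.
Lemma bimc_r a b b' c : ea_sum B b b' = Some c ->
  ea_sum C ((fun a b => h (f a) (g b)) a b) ((fun a b => h (f a) (g b)) a b')
    = Some ((fun a b => h (f a) (g b)) a c).
Proof. by move=> H; apply: bim_r; apply: eh_sum. Qed.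
Definition bim_comp : EABimor A B C := Build_EABimor bimc_one bimc_l bimc_r.
End BimComp.

Record EATensor := {
  tens : EffAlg -> EffAlg -> EffAlg;
  tau : forall A B, EABimor A B (tens A B);
  tlift : forall A B C, EABimor A B C -> EAHom (tens A B) C;
  tlift_tau : forall A B C (h : EABimor A B C) a b, tlift h (tau A B a b) = h a b;
  tlift_uniq : forall A B C (h : EABimor A B C) (k : EAHom (tens A B) C),
     (forall a b, k (tau A B a b) = h a b) -> forall x, k x = tlift h x }.

Definition tmap (T : EATensor) (A A' B B' : EffAlg) (f : EAHom A A') (g : EAHom B B')
  : EAHom (tens T A B) (tens T A' B') :=
  tlift T (bim_comp (tau T A' B') f g).

(** * FinBool: objects [n : nat], standing for the Boolean algebra 2^[n] = {set 'I_n};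
    morphisms are Boolean algebra homomorphisms. *)
Record BHom (n m : nat) := {
  bh :> {set 'I_n} -> {set 'I_m};
  bh_one : bh setT = setT;
  bh_zero : bh set0 = set0;
  bh_join : forall X Y, bh (X :|: Y) = bh X :|: bh Y;
  bh_meet : forall X Y, bh (X :&: Y) = bh X :&: bh Y;
  bh_compl : forall X, bh (~: X) = ~: bh X }.

Section BComp.
Variables (n m k : nat) (g : BHom m k) (f : BHom n m).
Let c := fun X => g (f X).
Lemma bc_one : c setT = setT. Proof. by rewrite /c !bh_one. Qed.
Lemma bc_zero : c set0 = set0. Proof. by rewrite /c !bh_zero. Qed.
Lemma bc_join X Y : c (X :|: Y) = c X :|: c Y. Proof. by rewrite /c !bh_join. Qed.
Lemma bc_meet X Y : c (X :&: Y) = c X :&: c Y. Proof. by rewrite /c !bh_meet. Qed.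
Lemma bc_compl X : c (~: X) = ~: c X. Proof. by rewrite /c !bh_compl. Qed.
Definition bcomp : BHom n k := Build_BHom bc_one bc_zero bc_join bc_meet bc_compl.
End BComp.

Section BoolEA.
Variable n : nat.
Definition bsum (X Y : {set 'I_n}) : option {set 'I_n} :=
  if [disjoint X & Y] then Some (X :|: Y) else None.

Lemma bsum_comm X Y : bsum X Y = bsum Y X.
Proof. by rewrite /bsum disjoint_sym setUC. Qed.

Lemma disjsU (X Y Z : {set 'I_n}) :
  [disjoint X :|: Y & Z] = [disjoint X & Z] && [disjoint Y & Z].
Proof. by rewrite !disjoints_subset subUset. Qed.

Lemma bsum_assoc X Y Z YZ : bsum Y Z = Some YZ -> bsum X YZ <> None ->
  exists XY, bsum X Y = Some XY /\ bsum XY Z = bsum X YZ.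
Proof.
rewrite /bsum; case: ifP => // dYZ [<-]; case: ifP => // dX _.
move: dX; rewrite disjoint_sym disjsU => /andP[dYX dZX].
have dXY : [disjoint X & Y] by rewrite disjoint_sym.
exists (X :|: Y); rewrite dXY; split=> //.
have dXZ : [disjoint X & Z] by rewrite disjoint_sym.
by rewrite disjsU dXZ dYZ setUA.
Qed.

Lemma bsum_orthosupp X : exists! X', bsum X X' = Some setT.
Proof.
exists (~: X); split.
  by rewrite /bsum disjoints_subset setCK subxx setUCr.
move=> X'; rewrite /bsum; case: ifP => // d [HU].
apply/setP=> x; rewrite inE; move/setP: HU => /(_ x); rewrite !inE.
have := @disjointFr _ _ _ x d.
by case: (x \in X); case: (x \in X') => // /(_ isT).
Qed.

Lemma bsum_zero_one X : bsum X setT <> None -> X = set0.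
Proof.
rewrite /bsum; case: ifP => // d _; apply/setP=> x; rewrite inE.
by apply/negP=> Hx; have := disjointFr d Hx; rewrite inE.
Qed.

Definition BoolEA : EffAlg :=
  @Build_EffAlg {set 'I_n} bsum set0 setT bsum_comm bsum_assoc bsum_orthosupp bsum_zero_one.
End BoolEA.

Section EMap.
Variables (n m : nat) (f : BHom n m).
Lemma Emap_one : (f : BoolEA n -> BoolEA m) (ea_one (BoolEA n)) = ea_one (BoolEA m).
Proof. exact: bh_one. Qed.
Lemma Emap_sum X Y Z : ea_sum (BoolEA n) X Y = Some Z ->
  ea_sum (BoolEA m) (f X) (f Y) = Some (f Z).
Proof.
rewrite /= /bsum; case: ifP => // d [<-].
rewrite bh_join -setI_eq0 -bh_meet.
by move: d; rewrite -setI_eq0 => /eqP ->; rewrite bh_zero eqxx.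
Qed.
Definition Emap : EAHom (BoolEA n) (BoolEA m) :=
  @Build_EAHom (BoolEA n) (BoolEA m) f Emap_one Emap_sum.
End EMap.

Record FBCoproduct := {
  cp : nat -> nat -> nat;
  cinl : forall n m, BHom n (cp n m);
  cinr : forall n m, BHom m (cp n m);
  copair : forall n m k, BHom n k -> BHom m k -> BHom (cp n m) k;
  copair_l : forall n m k (f : BHom n k) (g : BHom m k) X, copair f g (cinl n m X) = f X;
  copair_r : forall n m k (f : BHom n k) (g : BHom m k) Y, copair f g (cinr n m Y) = g Y;
  copair_uniq : forall n m k (f : BHom n k) (g : BHom m k) (h : BHom (cp n m) k),
     (forall X, h (cinl n m X) = f X) -> (forall Y, h (cinr n m Y) = g Y) ->
     forall Z, h Z = copair f g Z }.

Definition cpmap (C : FBCoproduct) n n' m m' (f : BHom n n') (g : BHom m m')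
  : BHom (cp C n m) (cp C n' m') :=
  copair C (bcomp (cinl C n' m') f) (bcomp (cinr C n' m') g).

Record PreBifunctor := {
  bf_obj : EffAlg -> EffAlg -> EffAlg;
  bf_map : forall A A' B B', EAHom A A' -> EAHom B B' -> EAHom (bf_obj A B) (bf_obj A' B') }.

Definition IsBifunctor (G : PreBifunctor) : Prop :=
  (forall A A' B B' (f f' : EAHom A A') (g g' : EAHom B B'),
      (forall a, f a = f' a) -> (forall b, g b = g' b) ->
      forall x, bf_map G f g x = bf_map G f' g' x) /\
  (forall A B x, bf_map G (EAid A) (EAid B) x = x) /\
  (forall A A' A'' B B' B'' (f : EAHom A A') (f' : EAHom A' A'')
          (g : EAHom B B') (g' : EAHom B' B'') x,
      bf_map G (EAcomp f' f) (EAcomp g' g) x = bf_map G f' g' (bf_map G f g x)).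

Definition tensorPF (T : EATensor) : PreBifunctor :=
  {| bf_obj := tens T; bf_map := fun A A' B B' f g => @tmap T A A' B B' f g |}.

Definition NatFB (C : FBCoproduct) (G : PreBifunctor)
  (eta : forall n m, EAHom (BoolEA (cp C n m)) (bf_obj G (BoolEA n) (BoolEA m))) : Prop :=
  forall n n' m m' (f : BHom n n') (g : BHom m m') x,
    eta n' m' (Emap (cpmap C f g) x) = bf_map G (Emap f) (Emap g) (eta n m x).

Arguments NatFB : clear implicits.

Definition NatEA (L G : PreBifunctor)
  (s : forall A B, EAHom (bf_obj L A B) (bf_obj G A B)) : Prop :=
  forall A A' B B' (f : EAHom A A') (g : EAHom B B') x,
    s A' B' (bf_map L f g x) = bf_map G f g (s A B x).

Arguments NatEA : clear implicits.

Definition IsLeftKan (C : FBCoproduct) (L : PreBifunctor)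
  (eta : forall n m, EAHom (BoolEA (cp C n m)) (bf_obj L (BoolEA n) (BoolEA m))) : Prop :=
  forall (G : PreBifunctor), IsBifunctor G ->
  forall (alpha : forall n m, EAHom (BoolEA (cp C n m)) (bf_obj G (BoolEA n) (BoolEA m))),
    NatFB C G alpha ->
    exists s : forall A B, EAHom (bf_obj L A B) (bf_obj G A B),
      NatEA L G s /\
      (forall n m x, alpha n m x = s (BoolEA n) (BoolEA m) (eta n m x)) /\
      (forall s' : forall A B, EAHom (bf_obj L A B) (bf_obj G A B),
         NatEA L G s' ->
         (forall n m x, alpha n m x = s' (BoolEA n) (BoolEA m) (eta n m x)) ->
         forall A B y, s' A B y = s A B y).

Arguments IsLeftKan : clear implicits.

(* Main.v *)
Require Import Defs.
From HB Require Import structures.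
From mathcomp Require Import all_boot.
From Stdlib Require Import ClassicalEpsilon.
Set Implicit Arguments. Unset Strict Implicit. Unset Printing Implicit Defensive.

Lemma osupp_uniq (D : EffAlg) (a x y : D) :
  ea_sum D a x = Some (ea_one D) -> ea_sum D a y = Some (ea_one D) -> x = y.
Proof.
move=> Hx Hy; case: (ea_orthosupp a) => a' [_ U].
by rewrite -(U _ Hx) -(U _ Hy).
Qed.

Lemma one_zero (D : EffAlg) : ea_sum D (ea_one D) (ea_zero D) = Some (ea_one D).
Proof.
case: (ea_orthosupp (ea_one D)) => o [H _].
have Ho : o = ea_zero D.
  by apply: ea_zero_one; rewrite ea_comm H.
by rewrite -Ho.
Qed.

Lemma zero_sum (D : EffAlg) (a : D) : ea_sum D (ea_zero D) a = Some a.
Proof.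
case: (ea_orthosupp a) => a' [Ha _].
have H01 : ea_sum D (ea_zero D) (ea_one D) = Some (ea_one D) by rewrite ea_comm one_zero.
have Hn : ea_sum D (ea_zero D) (ea_one D) <> None by rewrite H01.
have [ab [Hab Habc]] := @ea_assoc _ (ea_zero D) _ _ _ Ha Hn.
rewrite H01 in Habc.
have E : ab = a.
  apply: (@osupp_uniq _ a'); by rewrite ea_comm.
by rewrite Hab E.
Qed.

Lemma sum_zero (D : EffAlg) (a : D) : ea_sum D a (ea_zero D) = Some a.
Proof. by rewrite ea_comm zero_sum. Qed.

Lemma ea_assoc' (D : EffAlg) (a b c ab : D) : ea_sum D a b = Some ab -> ea_sum D ab c <> None ->
  exists bc, ea_sum D b c = Some bc /\ ea_sum D a bc = ea_sum D ab c.
Proof.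
move=> Hab Hn.
have Hba : ea_sum D b a = Some ab by rewrite ea_comm.
have Hn' : ea_sum D c ab <> None by rewrite ea_comm.
have [cb [Hcb E]] := @ea_assoc _ c _ _ _ Hba Hn'.
exists cb; split; first by rewrite ea_comm.
by rewrite ea_comm E ea_comm.
Qed.

Lemma ea_cancel (D : EffAlg) (a b c s : D) :
  ea_sum D a b = Some s -> ea_sum D a c = Some s -> b = c.
Proof.
move=> Hb Hc; case: (ea_orthosupp s) => s' [Hs _].
have Hn : ea_sum D s s' <> None by rewrite Hs.
have [t [Ht Hat]] := ea_assoc' Hb Hn.
have [t2 [Ht2 Hat2]] := ea_assoc' Hc Hn.
rewrite Hs in Hat Hat2.
have Et : t = t2 by apply: (@osupp_uniq _ a).
subst t2.
have Hn2 : ea_sum D t a <> None by rewrite ea_comm Hat.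
have [u [Hu Hbu]] := ea_assoc' Ht Hn2.
have [u2 [Hu2 Hcu]] := ea_assoc' Ht2 Hn2.
rewrite Hu in Hu2; case: Hu2 => Eu; subst u2.
rewrite (@ea_comm D t a) Hat in Hbu Hcu.
by apply: (@osupp_uniq _ u); rewrite ea_comm.
Qed.

Lemma idem_zero (D : EffAlg) (a : D) : ea_sum D a a = Some a -> a = ea_zero D.
Proof. by move=> H; apply: (ea_cancel H); rewrite sum_zero. Qed.

Definition osum (D : EffAlg) (o1 o2 : option D) : option D :=
  match o1, o2 with Some a, Some b => ea_sum D a b | _, _ => None end.

Lemma osumC (D : EffAlg) : commutative (@osum D).
Proof. by case=> [a|] [b|] //=; rewrite ea_comm. Qed.

Lemma osum0o (D : EffAlg) : left_id (Some (ea_zero D)) (@osum D).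
Proof. by case=> [a|] //=; rewrite zero_sum. Qed.

Lemma osumA (D : EffAlg) : associative (@osum D).
Proof.
move=> [x|] [y|] [z|] //=; try by case: (ea_sum D x y).
case Eyz: (ea_sum D y z) => [yz|] /=.
  case Ex: (ea_sum D x yz) => [r|].
    have Hn : ea_sum D x yz <> None by rewrite Ex.
    have [xy [Hxy E]] := @ea_assoc _ x _ _ _ Eyz Hn.
    by rewrite Hxy /= E.
  case Exy: (ea_sum D x y) => [xy|] //=.
  case Er: (ea_sum D xy z) => [r|] //.
  have Hn : ea_sum D xy z <> None by rewrite Er.
  have [bc [Hbc E]] := ea_assoc' Exy Hn.
  by rewrite Eyz in Hbc; case: Hbc => ?; subst bc; rewrite Ex Er in E.
case Exy: (ea_sum D x y) => [xy|] //=.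
case Er: (ea_sum D xy z) => [r|] //.
have Hn : ea_sum D xy z <> None by rewrite Er.
have [bc [Hbc E]] := ea_assoc' Exy Hn.
by rewrite Eyz in Hbc.
Qed.

HB.instance Definition _ (D : EffAlg) :=
  Monoid.isComLaw.Build (option D) (Some (ea_zero D)) (@osum D) (@osumA D) (@osumC D) (@osum0o D).

Lemma osum_setU (D : EffAlg) k (F : 'I_k -> option D) (A B : {set 'I_k}) : [disjoint A & B] ->
  \big[@osum D/Some (ea_zero D)]_(i in A :|: B) F i = osum (\big[@osum D/Some (ea_zero D)]_(i in A) F i) (\big[@osum D/Some (ea_zero D)]_(i in B) F i).
Proof.
move=> d; rewrite -bigU //; apply: eq_bigl => i; by rewrite !inE.
Qed.

Definition Osum (D : EffAlg) k (P : pred 'I_k) (F : 'I_k -> option D) :=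
  \big[@osum D/Some (ea_zero D)]_(i | P i) F i.

Definition additive n (D : EffAlg) (f : {set 'I_n} -> D) :=
  forall X Y Z, bsum X Y = Some Z -> ea_sum D (f X) (f Y) = Some (f Z).

Lemma add_zero n (D : EffAlg) (f : {set 'I_n} -> D) : additive f -> f set0 = ea_zero D.
Proof.
move=> Hf; apply: idem_zero; apply: Hf.
by rewrite /bsum disjoints_subset sub0set setU0.
Qed.

Lemma bool_decomp_seq k (l : seq 'I_k) : uniq l ->
  \big[@osum (BoolEA k)/Some (ea_zero (BoolEA k))]_(x <- l) Some ([set x] : BoolEA k)
   = Some ([set x in l] : BoolEA k).
Proof.
elim: l => [|x l IH] /=.
  by move=> _; rewrite big_nil; congr Some; apply/setP => y; rewrite !inE.
case/andP => xl ul; rewrite big_cons IH //= /bsum.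
have -> : [disjoint [set x] & [set x0 in l]].
  by rewrite disjoints_subset sub1set !inE.
congr Some; apply/setP => y; rewrite !inE; by [].
Qed.

Lemma bool_decomp k (Z : {set 'I_k}) :
  \big[@osum (BoolEA k)/Some (ea_zero (BoolEA k))]_(x in Z) Some ([set x] : BoolEA k) = Some (Z : BoolEA k).
Proof.
rewrite -big_enum bool_decomp_seq ?enum_uniq //.
by congr Some; apply/setP => x; rewrite inE mem_enum.
Qed.

Lemma add_big n (D : EffAlg) (f : {set 'I_n} -> D) (Z : {set 'I_n}) : additive f ->
  \big[@osum D/Some (ea_zero D)]_(x in Z) Some (f [set x]) = Some (f Z).
Proof.
move=> Hf.
pose K (o1 : option (BoolEA n)) (o2 : option D) := forall s, o1 = Some s -> o2 = Some (f s).
have : K (\big[@osum (BoolEA n)/Some set0]_(x in Z) Some [set x])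
         (\big[@osum D/Some (ea_zero D)]_(x in Z) Some (f [set x])).
  apply: (@big_ind2 _ _ K).
  - by move=> s [<-]; rewrite add_zero.
  - move=> y1 y2 z1 z2 H1 H2 s; case: y1 H1 => [y1|] H1 //; case: z1 H2 => [z1|] H2 //.
    rewrite (H1 y1 erefl) (H2 z1 erefl); exact: Hf.
  - by move=> i _ s [<-].
by move/(_ Z (bool_decomp Z)).
Qed.

Lemma add_ext n (D : EffAlg) (f g : {set 'I_n} -> D) : additive f -> additive g ->
  (forall x, f [set x] = g [set x]) -> forall Z, f Z = g Z.
Proof.
move=> Hf Hg E Z.
have := add_big Z Hf; rewrite (eq_bigr (fun x => Some (g [set x]))); last by move=> i _; rewrite E.
by rewrite add_big // => -[].
Qed.

Lemma hom_add n (D : EffAlg) (f : EAHom (BoolEA n) D) : additive f.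
Proof. by move=> X Y Z H; apply: eh_sum. Qed.

Definition phi k (D : EffAlg) (dd : 'I_k -> option D) (Z : {set 'I_k}) : D :=
  odflt (ea_zero D) (\big[@osum D/Some (ea_zero D)]_(x in Z) dd x).

Definition Total k (D : EffAlg) (dd : 'I_k -> option D) :=
  \big[@osum D/Some (ea_zero D)]_(x in [set: 'I_k]) dd x = Some (ea_one D).

Lemma phi_some k (D : EffAlg) (dd : 'I_k -> option D) (H : Total dd) (Z : {set 'I_k}) :
  \big[@osum D/Some (ea_zero D)]_(x in Z) dd x = Some (phi dd Z).
Proof.
move: H; rewrite /Total /phi -(setUCr Z) osum_setU; last first.
  by rewrite disjoints_subset setCK subxx.
by case: (\big[@osum D/Some (ea_zero D)]_(x in Z) dd x).
Qed.

Lemma phi_one k (D : EffAlg) (dd : 'I_k -> option D) (H : Total dd) :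
  phi dd (ea_one (BoolEA k)) = ea_one D.
Proof. by rewrite /phi /= H. Qed.

Lemma phi_sum k (D : EffAlg) (dd : 'I_k -> option D) (H : Total dd) X Y Z :
  ea_sum (BoolEA k) X Y = Some Z -> ea_sum D (phi dd X) (phi dd Y) = Some (phi dd Z).
Proof.
rewrite /= /bsum; case: ifP => // d [<-].
by rewrite -(phi_some H) osum_setU // !(phi_some H).
Qed.

Definition mkhom k (D : EffAlg) (dd : 'I_k -> option D) (H : Total dd) : EAHom (BoolEA k) D :=
  @Build_EAHom (BoolEA k) D (phi dd) (phi_one H) (@phi_sum k D dd H).

Lemma mkhom1 k (D : EffAlg) (dd : 'I_k -> option D) (H : Total dd) x :
  dd x = Some (mkhom H [set x]).
Proof. by rewrite /= -(phi_some H) big_set1. Qed.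

Lemma TotalE k (D : EffAlg) (dd : 'I_k -> option D) :
  \big[@osum D/Some (ea_zero D)]_(i < k) dd i = Some (ea_one D) -> Total dd.
Proof. by move=> H; rewrite /Total -H; apply: eq_bigl => x; rewrite in_setT. Qed.

Lemma hom_compl n (D : EffAlg) (f : EAHom (BoolEA n) D) (X : {set 'I_n}) :
  ea_sum D (f X) (f (~: X)) = Some (ea_one D).
Proof.
rewrite -(eh_one f); apply: eh_sum => /=; rewrite /bsum disjoints_subset setCK subxx.
by rewrite setUCr.
Qed.

Lemma ex_osupp (D : EffAlg) (a : D) : exists x, ea_sum D a x = Some (ea_one D).
Proof. by case: (ea_orthosupp a) => x [H _]; exists x. Qed.
Definition oc (D : EffAlg) (a : D) : D :=
  proj1_sig (constructive_indefinite_description _ (ex_osupp a)).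
Lemma ocP (D : EffAlg) (a : D) : ea_sum D a (oc a) = Some (ea_one D).
Proof. exact: (proj2_sig (constructive_indefinite_description _ (ex_osupp a))). Qed.

Lemma set1_2 : [set ord_max] = ~: [set ord0 : 'I_2].
Proof. by apply/setP => x; rewrite !inE; case: x => [[|[|]]]. Qed.

Lemma ext2 (D : EffAlg) (f g : EAHom (BoolEA 2) D) :
  f [set ord0] = g [set ord0] -> forall Z, f Z = g Z.
Proof.
move=> E; apply: (@add_ext 2 D f g (hom_add f) (hom_add g)).
move=> [[|[|]]] // Hx.
  by have -> : Ordinal Hx = ord0 by apply: val_inj.
have -> : Ordinal Hx = ord_max by apply: val_inj.
rewrite set1_2; apply: (@osupp_uniq _ (f [set ord0])); first by apply: hom_compl.
by rewrite E hom_compl.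
Qed.

Definition dd2 (D : EffAlg) (a : D) (x : 'I_2) : option D :=
  Some (if x == ord0 then a else oc a).
Lemma dd2T (D : EffAlg) (a : D) : Total (dd2 a).
Proof.
apply: TotalE; rewrite !big_ord_recl big_ord0 /dd2 /=.
by rewrite sum_zero ocP.
Qed.
Definition gen2 (D : EffAlg) (a : D) : EAHom (BoolEA 2) D := mkhom (dd2T a).
Lemma gen2_0 (D : EffAlg) (a : D) : gen2 a [set ord0] = a.
Proof. by have := mkhom1 (dd2T a) ord0; rewrite /dd2 eqxx => -[]. Qed.

Lemma gen2_uniq (D : EffAlg) (f : EAHom (BoolEA 2) D) Z : f Z = gen2 (f [set ord0]) Z.
Proof. by apply: ext2; rewrite gen2_0. Qed.

Definition dd1 (D : EffAlg) (x : 'I_1) : option D := Some (ea_one D).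
Lemma dd1T (D : EffAlg) : Total (@dd1 D).
Proof. by apply: TotalE; rewrite big_ord_recl big_ord0 /dd1 /= sum_zero. Qed.
Definition gen1 (D : EffAlg) : EAHom (BoolEA 1) D := mkhom (@dd1T D).

Lemma preT k n (p : 'I_k -> 'I_n) : p @^-1: [set: 'I_n] = [set: 'I_k].
Proof. by apply/setP => x; rewrite !inE. Qed.
Lemma pre0 k n (p : 'I_k -> 'I_n) : p @^-1: (set0 : {set 'I_n}) = set0.
Proof. by apply/setP => x; rewrite !inE. Qed.
Lemma preU k n (p : 'I_k -> 'I_n) X Y : p @^-1: (X :|: Y) = p @^-1: X :|: p @^-1: Y.
Proof. by apply/setP => x; rewrite !inE. Qed.
Lemma preI k n (p : 'I_k -> 'I_n) X Y : p @^-1: (X :&: Y) = p @^-1: X :&: p @^-1: Y.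
Proof. by apply/setP => x; rewrite !inE. Qed.
Lemma preC k n (p : 'I_k -> 'I_n) X : p @^-1: (~: X) = ~: p @^-1: X.
Proof. by apply/setP => x; rewrite !inE. Qed.
Definition preH k n (p : 'I_k -> 'I_n) : BHom n k :=
  Build_BHom (preT p) (pre0 p) (preU p) (preI p) (preC p).

Lemma bh_mem n k (f : BHom n k) (z : 'I_k) i (X : {set 'I_n}) :
  z \in f [set i] -> (z \in f X) = (i \in X).
Proof.
move=> Hz; case: (boolP (i \in X)) => Hi.
  have -> : X = [set i] :|: X by apply/setP => y; rewrite !inE; case: eqP => // ->.
  by rewrite bh_join inE Hz.
apply/negP => HzX.
have : z \in f [set i] :&: f X by rewrite inE Hz.
rewrite -bh_meet.
have -> : [set i] :&: X = set0.
  by apply/setP => y; rewrite !inE; case: eqP => // ->; rewrite (negPf Hi).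
by rewrite bh_zero inE.
Qed.

Lemma bh_mem1 n k (f : BHom n k) (z : 'I_k) i i' :
  z \in f [set i] -> z \in f [set i'] -> i = i'.
Proof. by move=> H; rewrite (bh_mem _ H) inE => /eqP ->. Qed.

Lemma bh_cover n k (f : BHom n k) (z : 'I_k) : exists i, z \in f [set i].
Proof.
have E : f [set: 'I_n] = \big[@setU _/set0]_(i in [set: 'I_n]) f [set i].
  have U : \big[@setU _/set0]_(i in [set: 'I_n]) [set i] = [set: 'I_n].
    apply/setP => y; rewrite inE; apply/bigcupP; exists y; by rewrite ?inE.
  by rewrite -(big_morph f (bh_join f) (bh_zero f)) U.
have : z \in f [set: 'I_n] by rewrite bh_one inE.
by rewrite E => /bigcupP [i _ Hi]; exists i.
Qed.

Definition atom (C : FBCoproduct) n m i j := cinl C n m [set i] :&: cinr C n m [set j].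

Definition evH k (z : 'I_k) : BHom k 1 := preH (fun _ : 'I_1 => z).

Lemma atom_sep (C : FBCoproduct) n m i j z z' :
  z \in @atom C n m i j -> z' \in @atom C n m i j -> z = z'.
Proof.
rewrite !inE => /andP [zl zr] /andP [z'l z'r].
have Hl : forall X, evH z' (cinl C n m X) = bcomp (evH z) (cinl C n m) X.
  move=> X /=; apply/setP => u; rewrite !inE (bh_mem _ zl) (bh_mem _ z'l) //.
have Hr : forall Y, evH z' (cinr C n m Y) = bcomp (evH z) (cinr C n m) Y.
  move=> Y /=; apply/setP => u; rewrite !inE (bh_mem _ zr) (bh_mem _ z'r) //.
have E1 := copair_uniq Hl Hr [set z].
have E2 := @copair_uniq C n m 1 (bcomp (evH z) (cinl C n m)) (bcomp (evH z) (cinr C n m))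
   (evH z) (fun X => erefl) (fun Y => erefl) [set z].
have : ord0 \in evH z [set z] by rewrite /= !inE.
by rewrite E2 -E1 /= !inE => /eqP.
Qed.

Lemma atom_ne (C : FBCoproduct) n m i j : exists z, z \in @atom C n m i j.
Proof.
apply/set0Pn/negP => /eqP E.
pose h := copair C (evH i) (evH j).
have : h (@atom C n m i j) = [set: 'I_1].
  rewrite /atom bh_meet /h copair_l copair_r /=.
  by apply/setP => u; rewrite !inE !eqxx.
rewrite E bh_zero => /setP /(_ ord0); by rewrite !inE.
Qed.

Lemma atom_single (C : FBCoproduct) n m i j : exists z, @atom C n m i j = [set z].
Proof.
have [z Hz] := atom_ne C i j; exists z; apply/setP => u; rewrite inE.
apply/idP/eqP => [Hu|->//]; exact: atom_sep Hu Hz.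
Qed.

Lemma atom_uniq (C : FBCoproduct) n m i j i' j' z :
  z \in @atom C n m i j -> z \in @atom C n m i' j' -> i = i' /\ j = j'.
Proof.
rewrite !inE => /andP [l r] /andP [l' r'].
by split; [apply: bh_mem1 l l' | apply: bh_mem1 r r'].
Qed.

Lemma point_atom (C : FBCoproduct) n m z : exists i j, [set z] = @atom C n m i j.
Proof.
have [i Hi] := bh_cover (cinl C n m) z.
have [j Hj] := bh_cover (cinr C n m) z.
exists i, j; have [z0 E] := atom_single C i j.
have : z \in @atom C n m i j by rewrite inE Hi Hj.
by rewrite E inE => /eqP ->.
Qed.

Lemma bim_add_r (A B D : EffAlg) (h : EABimor A B D) n (f : EAHom (BoolEA n) B) (a : A) :
  additive (fun Y => h a (f Y)).
Proof. by move=> X Y Z H; apply: bim_r; apply: eh_sum. Qed.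
Lemma bim_add_l (A B D : EffAlg) (h : EABimor A B D) n (f : EAHom (BoolEA n) A) (b : B) :
  additive (fun X => h (f X) b).
Proof. by move=> X Y Z H; apply: bim_l; apply: eh_sum. Qed.

Definition Eid n : EAHom (BoolEA n) (BoolEA n) := EAid (BoolEA n).

Definition dde (C : FBCoproduct) (T : EATensor) n m (z : 'I_(cp C n m))
  : option (tens T (BoolEA n) (BoolEA m)) :=
  \big[@osum _/Some (ea_zero _)]_(p : 'I_n * 'I_m | z \in atom C p.1 p.2)
     Some (tau T (BoolEA n) (BoolEA m) [set p.1] [set p.2]).

Lemma tau_sum (T : EATensor) n m :
  \big[@osum _/Some (ea_zero _)]_(p : 'I_n * 'I_m)
     Some (tau T (BoolEA n) (BoolEA m) [set p.1] [set p.2]) = Some (ea_one _).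
Proof.
rewrite -(bim_one (tau T (BoolEA n) (BoolEA m))).
rewrite (eq_bigl (fun p => (p.1 \in [set: 'I_n]) && (p.2 \in [set: 'I_m]))); last first.
  by move=> p; rewrite !inE.
rewrite -(pair_big (fun i => i \in [set: 'I_n]) (fun j => j \in [set: 'I_m])
  (fun i j => Some (tau T (BoolEA n) (BoolEA m) [set i] [set j]))) /=.
have Hin : forall i, \big[@osum _/Some (ea_zero _)]_(j in [set: 'I_m])
     Some (tau T (BoolEA n) (BoolEA m) [set i] [set j]) =
     Some (tau T (BoolEA n) (BoolEA m) [set i] [set: 'I_m]).
  by move=> i; apply: (add_big _ (bim_add_r _ (Eid m) _)).
rewrite (eq_bigr _ (fun i _ => Hin i)).
exact: (add_big _ (bim_add_l _ (Eid n) _)).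
Qed.

Lemma ddeT (C : FBCoproduct) (T : EATensor) n m : Total (@dde C T n m).
Proof.
apply: TotalE; rewrite /dde.
rewrite (exchange_big_dep predT) //=.
rewrite -(tau_sum T n m); apply: eq_bigr => p _.
have [z0 E] := atom_single C p.1 p.2.
rewrite (big_pred1 z0) // => z; by rewrite /= E inE.
Qed.

Definition etaT (C : FBCoproduct) (T : EATensor) n m
  : EAHom (BoolEA (cp C n m)) (tens T (BoolEA n) (BoolEA m)) := mkhom (@ddeT C T n m).

Lemma etaT_atom (C : FBCoproduct) (T : EATensor) n m (i : 'I_n) (j : 'I_m) :
  etaT C T n m (atom C i j) = tau T (BoolEA n) (BoolEA m) [set i] [set j].
Proof.
have [z0 E] := atom_single C i j.
have Hz : z0 \in atom C i j by rewrite E inE.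
rewrite E; have := mkhom1 (@ddeT C T n m) z0; rewrite /dde.
rewrite (big_pred1 (i, j)) => [[]//|p /=].
apply/idP/eqP => [Hp|->//].
by case: (atom_uniq Hp Hz) => E1 E2; rewrite [p]surjective_pairing E1 E2.
Qed.

Lemma Ladd n k (f : BHom n k) (c : {set 'I_k}) X1 X2 X3 :
  bsum X1 X2 = Some X3 -> bsum (f X1 :&: c) (f X2 :&: c) = Some (f X3 :&: c).
Proof.
rewrite /bsum; case: ifP => // d [<-].
have -> : [disjoint f X1 :&: c & f X2 :&: c].
  rewrite -setI_eq0; apply/eqP/setP => z; rewrite !inE.
  have : z \notin f X1 :&: f X2 by rewrite -bh_meet; move: d; rewrite -setI_eq0 => /eqP ->; rewrite bh_zero inE.
  by rewrite inE; case: (z \in f X1); case: (z \in f X2); case: (z \in c).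
by rewrite bh_join setIUl.
Qed.

Lemma Radd n k (f : BHom n k) (c : {set 'I_k}) X1 X2 X3 :
  bsum X1 X2 = Some X3 -> bsum (c :&: f X1) (c :&: f X2) = Some (c :&: f X3).
Proof. by rewrite ![c :&: _]setIC; apply: Ladd. Qed.

Lemma etaT_tau (C : FBCoproduct) (T : EATensor) n m X Y :
  etaT C T n m (cinl C n m X :&: cinr C n m Y) = tau T (BoolEA n) (BoolEA m) X Y.
Proof.
have addL : forall Y0, additive (fun X0 => etaT C T n m (cinl C n m X0 :&: cinr C n m Y0)).
  by move=> Y0 X1 X2 X3 H; apply: eh_sum; apply: Ladd.
have addR : forall X0, additive (fun Y0 => etaT C T n m (cinl C n m X0 :&: cinr C n m Y0)).
  by move=> X0 X1 X2 X3 H; apply: eh_sum; apply: Radd.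
have tL : forall Y0, additive (fun X0 => tau T (BoolEA n) (BoolEA m) X0 Y0).
  by move=> Y0; apply: (bim_add_l _ (Eid n)).
have tR : forall X0, additive (fun Y0 => tau T (BoolEA n) (BoolEA m) X0 Y0).
  by move=> X0; apply: (bim_add_r _ (Eid m)).
move: X; apply: (add_ext (addL Y) (tL Y)) => i.
move: Y; apply: (add_ext (addR _) (tR _)) => j.
exact: etaT_atom.
Qed.

Lemma cpmap_atom (C : FBCoproduct) n n' m m' (f : BHom n n') (g : BHom m m') X Y :
  cpmap C f g (cinl C n m X :&: cinr C n m Y) = cinl C n' m' (f X) :&: cinr C n' m' (g Y).
Proof. by rewrite bh_meet /cpmap copair_l copair_r. Qed.

Definition w2 (C : FBCoproduct) := cinl C 2 2 [set ord0] :&: cinr C 2 2 [set ord0].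

Definition hfun (C : FBCoproduct) (G : PreBifunctor)
  (alpha : forall n m, EAHom (BoolEA (cp C n m)) (bf_obj G (BoolEA n) (BoolEA m)))
  (A B : EffAlg) (a : A) (b : B) : bf_obj G A B :=
  bf_map G (gen2 a) (gen2 b) (alpha 2 2 (w2 C)).

Lemma R1 (C : FBCoproduct) (G : PreBifunctor) (Gb : IsBifunctor G)
  (alpha : forall n m, EAHom (BoolEA (cp C n m)) (bf_obj G (BoolEA n) (BoolEA m)))
  (Hal : NatFB C G alpha) (A B : EffAlg) k l (F : EAHom (BoolEA k) A) (Gm : EAHom (BoolEA l) B)
  (p : 'I_k -> 'I_2) (q : 'I_l -> 'I_2) :
  @hfun C G alpha _ _ (F (p @^-1: [set ord0])) (Gm (q @^-1: [set ord0])) =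
  bf_map G F Gm (alpha k l (cinl C k l (p @^-1: [set ord0]) :&: cinr C k l (q @^-1: [set ord0]))).
Proof.
case: Gb => [Gext [Gid Gcomp]].
rewrite /hfun (Gext _ _ _ _ _ (EAcomp F (Emap (preH p))) _ (EAcomp Gm (Emap (preH q)))).
- by rewrite Gcomp -Hal /= cpmap_atom.
- by move=> Z; rewrite [RHS]gen2_uniq.
- by move=> Z; rewrite [RHS]gen2_uniq.
Qed.

Definition o1 : 'I_3 := Ordinal (isT : 1 < 3).
Definition p1 (x : 'I_3) : 'I_2 := if x == ord0 then ord0 else ord_max.
Definition p2 (x : 'I_3) : 'I_2 := if x == o1 then ord0 else ord_max.
Definition p3 (x : 'I_3) : 'I_2 := if x == ord_max then ord_max else ord0.

Lemma p1E : p1 @^-1: [set ord0] = [set ord0].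
Proof. by apply/setP => x; rewrite !inE /p1; case: x => [[|[|[|]]] ?]. Qed.
Lemma p2E : p2 @^-1: [set ord0] = [set o1].
Proof. by apply/setP => x; rewrite !inE /p2; case: x => [[|[|[|]]] ?]. Qed.
Lemma p3E : p3 @^-1: [set ord0] = [set ord0] :|: [set o1].
Proof. by apply/setP => x; rewrite !inE /p3; case: x => [[|[|[|]]] ?]. Qed.
Lemma bs3 : bsum [set ord0] [set o1] = Some ([set ord0] :|: [set o1]).
Proof. by rewrite /bsum disjoints_subset sub1set !inE. Qed.

Definition dd3 (D : EffAlg) (a a' e : D) (x : 'I_3) : option D := Some (nth (ea_zero D) [:: a; a'; e] x).

Lemma three (D : EffAlg) (a a' c : D) : ea_sum D a a' = Some c ->
  exists F : EAHom (BoolEA 3) D,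
    F (p1 @^-1: [set ord0]) = a /\ F (p2 @^-1: [set ord0]) = a' /\ F (p3 @^-1: [set ord0]) = c.
Proof.
move=> Hc.
have HT : Total (dd3 a a' (oc c)).
  apply: TotalE; rewrite !big_ord_recl big_ord0 /dd3 /=.
  rewrite sum_zero.
  have := osumA (Some a) (Some a') (Some (oc c)); rewrite /= Hc /= ocP => ->.
  by [].
exists (mkhom HT).
have Ea : mkhom HT [set ord0] = a by have := mkhom1 HT ord0; case.
have Ea' : mkhom HT [set o1] = a' by have := mkhom1 HT o1; case.
rewrite p1E p2E p3E Ea Ea'; split=> //; split=> //.
by have := eh_sum (mkhom HT) bs3; rewrite Ea Ea' Hc => -[].
Qed.

Lemma pid_E : (fun x : 'I_2 => x) @^-1: [set ord0] = [set ord0].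
Proof. by apply/setP => x; rewrite !inE. Qed.

Lemma pre_const : (fun _ : 'I_1 => ord0 : 'I_2) @^-1: [set ord0] = [set: 'I_1].
Proof. by apply/setP => x; rewrite !inE. Qed.

Lemma hone (C : FBCoproduct) (G : PreBifunctor) (Gb : IsBifunctor G)
  (alpha : forall n m, EAHom (BoolEA (cp C n m)) (bf_obj G (BoolEA n) (BoolEA m)))
  (Hal : NatFB C G alpha) (A B : EffAlg) :
  @hfun C G alpha A B (ea_one A) (ea_one B) = ea_one (bf_obj G A B).
Proof.
have := R1 Gb Hal (gen1 A) (gen1 B) (fun _ => ord0) (fun _ => ord0).
rewrite !pre_const.
have e1 : forall D, gen1 D [set: 'I_1] = ea_one D by move=> D; apply: eh_one.
rewrite !e1 => ->.
have -> : cinl C 1 1 [set: 'I_1] :&: cinr C 1 1 [set: 'I_1] = ea_one (BoolEA (cp C 1 1)).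
  by rewrite !bh_one setIid.
by rewrite !eh_one.
Qed.

Lemma hl (C : FBCoproduct) (G : PreBifunctor) (Gb : IsBifunctor G)
  (alpha : forall n m, EAHom (BoolEA (cp C n m)) (bf_obj G (BoolEA n) (BoolEA m)))
  (Hal : NatFB C G alpha) (A B : EffAlg) (b : B) (a a' c : A) :
  ea_sum A a a' = Some c ->
  ea_sum (bf_obj G A B) (@hfun C G alpha A B a b) (@hfun C G alpha A B a' b)
     = Some (@hfun C G alpha A B c b).
Proof.
move=> Hc; have [F [Fa [Fa' Fc]]] := three Hc.
have R := R1 Gb Hal F (gen2 b).
have Eb : gen2 b ((fun x : 'I_2 => x) @^-1: [set ord0]) = b by rewrite pid_E gen2_0.
have E1 := R p1 (fun x => x); rewrite Fa Eb in E1.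
have E2 := R p2 (fun x => x); rewrite Fa' Eb in E2.
have E3 := R p3 (fun x => x); rewrite Fc Eb in E3.
rewrite E1 E2 E3; apply: eh_sum; apply: eh_sum => /=.
by apply: Ladd; rewrite p1E p2E p3E bs3.
Qed.

Lemma hr (C : FBCoproduct) (G : PreBifunctor) (Gb : IsBifunctor G)
  (alpha : forall n m, EAHom (BoolEA (cp C n m)) (bf_obj G (BoolEA n) (BoolEA m)))
  (Hal : NatFB C G alpha) (A B : EffAlg) (a : A) (b b' c : B) :
  ea_sum B b b' = Some c ->
  ea_sum (bf_obj G A B) (@hfun C G alpha A B a b) (@hfun C G alpha A B a b')
     = Some (@hfun C G alpha A B a c).
Proof.
move=> Hc; have [F [Fa [Fa' Fc]]] := three Hc.
have R := R1 Gb Hal (gen2 a) F.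
have Eb : gen2 a ((fun x : 'I_2 => x) @^-1: [set ord0]) = a by rewrite pid_E gen2_0.
have E1 := R (fun x => x) p1; rewrite Fa Eb in E1.
have E2 := R (fun x => x) p2; rewrite Fa' Eb in E2.
have E3 := R (fun x => x) p3; rewrite Fc Eb in E3.
rewrite E1 E2 E3; apply: eh_sum; apply: eh_sum => /=.
by apply: Radd; rewrite p1E p2E p3E bs3.
Qed.

Definition hbim (C : FBCoproduct) (G : PreBifunctor) (Gb : IsBifunctor G)
  (alpha : forall n m, EAHom (BoolEA (cp C n m)) (bf_obj G (BoolEA n) (BoolEA m)))
  (Hal : NatFB C G alpha) (A B : EffAlg) : EABimor A B (bf_obj G A B) :=
  Build_EABimor (hone Gb Hal A B) (@hl C G Gb alpha Hal A B) (@hr C G Gb alpha Hal A B).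

Lemma kbim_one (T : EATensor) A B D (k : EAHom (tens T A B) D) :
  (fun a b => k (tau T A B a b)) (ea_one A) (ea_one B) = ea_one D.
Proof. by rewrite /= bim_one eh_one. Qed.
Lemma kbim_l (T : EATensor) A B D (k : EAHom (tens T A B) D) b a a' c :
  ea_sum A a a' = Some c -> ea_sum D ((fun a b => k (tau T A B a b)) a b)
    ((fun a b => k (tau T A B a b)) a' b) = Some ((fun a b => k (tau T A B a b)) c b).
Proof. by move=> H; apply: eh_sum; apply: bim_l. Qed.
Lemma kbim_r (T : EATensor) A B D (k : EAHom (tens T A B) D) a b b' c :
  ea_sum B b b' = Some c -> ea_sum D ((fun a b => k (tau T A B a b)) a b)
    ((fun a b => k (tau T A B a b)) a b') = Some ((fun a b => k (tau T A B a b)) a c).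
Proof. by move=> H; apply: eh_sum; apply: bim_r. Qed.
Definition kbim (T : EATensor) A B D (k : EAHom (tens T A B) D) : EABimor A B D :=
  Build_EABimor (kbim_one k) (@kbim_l T A B D k) (@kbim_r T A B D k).

Lemma tens_ext (T : EATensor) A B D (k1 k2 : EAHom (tens T A B) D) :
  (forall a b, k1 (tau T A B a b) = k2 (tau T A B a b)) -> forall x, k1 x = k2 x.
Proof.
move=> E x; rewrite (tlift_uniq (h := kbim k2) (k := k1) E x).
by rewrite (tlift_uniq (h := kbim k2) (k := k2) (fun a b => erefl) x).
Qed.

Lemma tmap_tau (T : EATensor) A A' B B' (f : EAHom A A') (g : EAHom B B') a b :
  tmap T f g (tau T A B a b) = tau T A' B' (f a) (g b).
Proof. by rewrite /tmap tlift_tau. Qed.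

Definition preIdx k (i : 'I_k) (x : 'I_k) : 'I_2 := if x == i then ord0 else ord_max.
Lemma preIdxE k (i : 'I_k) : preIdx i @^-1: [set ord0] = [set i].
Proof. by apply/setP => x; rewrite !inE /preIdx; case: (x == i). Qed.

Lemma gen2_comp (D E : EffAlg) (f : EAHom D E) (a : D) Z :
  gen2 (f a) Z = EAcomp f (gen2 a) Z.
Proof.
rewrite [RHS]gen2_uniq.
change (gen2 (f a) Z = gen2 (f (gen2 a [set ord0])) Z); by rewrite gen2_0.
Qed.

Theorem mainTheorem7 (C : FBCoproduct) (T : EATensor) :
  exists eta : forall n m, EAHom (BoolEA (cp C n m)) (tens T (BoolEA n) (BoolEA m)),
    NatFB C (tensorPF T) eta /\ IsLeftKan C (tensorPF T) eta.
Proof.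
exists (etaT C T); split.
  move=> n n' m m' f g x /=.
  have a1 : additive (fun x => etaT C T n' m' (Emap (cpmap C f g) x)).
    by move=> X Y Z H; apply: eh_sum; apply: (eh_sum (Emap (cpmap C f g))).
  have a2 : additive (fun x => tmap T (Emap f) (Emap g) (etaT C T n m x)).
    by move=> X Y Z H; apply: eh_sum; apply: (eh_sum (etaT C T n m)).
  move: x; apply: (add_ext a1 a2) => z.
  have [i [j ->]] := point_atom z.
  rewrite /atom; change (etaT C T n' m' (cpmap C f g (cinl C n m [set i] :&: cinr C n m [set j]))
    = tmap T (Emap f) (Emap g) (etaT C T n m (cinl C n m [set i] :&: cinr C n m [set j]))).
  by rewrite cpmap_atom !etaT_tau tmap_tau.
move=> G Gb alpha Hal.
have [Gext [Gid Gcomp]] := Gb.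
exists (fun A B => tlift T (hbim Gb Hal A B)); split; last split.
- move=> A A' B B' f g x.
  have K := tens_ext (k1 := EAcomp (tlift T (hbim Gb Hal A' B')) (tmap T f g))
                   (k2 := EAcomp (bf_map G f g) (tlift T (hbim Gb Hal A B))).
  apply: K => a b /=.
  rewrite tmap_tau !tlift_tau /= /hfun -Gcomp.
  apply: Gext => Z.
  + exact: gen2_comp.
  + exact: gen2_comp.
- move=> n m x.
  have a1 : additive (alpha n m) by apply: hom_add.
  have a2 : additive (fun x => tlift T (hbim Gb Hal (BoolEA n) (BoolEA m)) (etaT C T n m x)).
    by move=> X Y Z H; apply: eh_sum; apply: (eh_sum (etaT C T n m)).
  move: x; apply: (add_ext a1 a2) => z.
  have [i [j ->]] := point_atom z.
  change (alpha n m (atom C i j) = tlift T (hbim Gb Hal (BoolEA n) (BoolEA m)) (etaT C T n m (atom C i j))).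
  rewrite etaT_atom tlift_tau.
  have E := R1 Gb Hal (EAid (BoolEA n)) (EAid (BoolEA m)) (preIdx i) (preIdx j).
  rewrite !preIdxE in E.
  rewrite -[LHS](Gid _ _ (alpha n m (atom C i j))).
  exact: (esym E).
- move=> s' Hs' Hfac A B y.
  apply: tlift_uniq => a b.
  rewrite /= -[in LHS](gen2_0 a) -[in LHS](gen2_0 b) -tmap_tau.
  have := Hs' _ _ _ _ (gen2 a) (gen2 b) (tau T (BoolEA 2) (BoolEA 2) [set ord0] [set ord0]).
  rewrite /= => ->.
  by rewrite -(etaT_tau C T) -Hfac.
Qed.
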